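(* Let $a,b$ be integers and let $G\in\mathscr{G}_{a,b}$ be a graph containing a cycle and at least one pendant vertex, with base $\widetilde G$. (i) If $u\in V_{\widetilde G}$, then $d_G(u)\in\{d_{\widetilde G}(u),\,a+b-1\}$; if $u\notin V_{\widetilde G}$, then $d_G(u)=1$. (ii) If $u\in V_{\widetilde G}$ is an attached vertex, then $b\le -1$, $d_G(u)=a+b-1>d_{\widetilde G}(u)$, and $\sum_{v\in N_{\widetilde G}(u)}d_G(v)=-ab-b^2+2b+d_{\widetilde G}(u)$.
   Context: All graphs are simple and connected; $d_G(v)$ is the degree of $v$, $N_G(v)$ its neighbourhood. For integers $a,b$, $\mathscr{G}_{a,b}$ is the set of connected graphs $G$ such that for every $v\in V_G$, $\sum_{u\in N_G(v)}d_G(u)=a\,d_G(v)+b-d_G(v)^2$. A pendant vertex is a vertex of degree $1$. The base $\widetilde{G}$ of $G$ is the subgraph obtained from $G$ by repeatedly deleting pendant vertices until none remain. A vertex $u\in V_{\widetilde G}$ is called an attached vertex if it is adjacent in $G$ to some pendant vertex, and a non-attached vertex otherwise. *)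

(* Defs.v *)
(* Simple graphs as symmetric irreflexive relations on a finType. *)
From mathcomp Require Import all_boot all_order all_algebra.
Set Implicit Arguments. Unset Strict Implicit. Unset Printing Implicit Defensive.
Import Order.TTheory GRing.Theory Num.Theory.

Section Graphs.
Variable T : finType.
Variable e : rel T.

Definition simple_graph := symmetric e /\ irreflexive e.

Definition connected_graph := forall x y : T, connect e x y.

Definition nbhd (v : T) : {set T} := [set u | e v u].
Definition deg (v : T) : nat := #|nbhd v|.

Definition deg_in (S : {set T}) (v : T) : nat := #|[set u in S | e v u]|.

Definition has_cycle := exists s : seq T, [/\ 3 <= size s, uniq s & cycle e s].

Definition pendant (v : T) := deg v == 1.

Definition in_Gab (a b : int) :=
  connected_graph /\
  forall v : T, (\sum_(u in nbhd v) (deg u)%:Z = a * (deg v)%:Z + b - (deg v)%:Z ^+ 2)%R.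

Definition prune (S : {set T}) : {set T} := [set v in S | deg_in S v != 1].

(* vertex set of the base: iterate pruning; after #|T| steps a fixpoint is reached *)
Definition base : {set T} := iter #|T| prune [set: T].

Definition deg_base (v : T) : nat := deg_in base v.

Definition attached (u : T) := (u \in base) && [exists w, e u w && pendant w].

End Graphs.

(* Main.v *)
Require Import Defs.
From mathcomp Require Import all_boot all_order all_algebra.
From mathcomp Require Import zify ring lra.
Import Order.TTheory GRing.Theory Num.Theory.

Lemma sumZ (I : finType) (P : pred I) (F : I -> nat) :
  (\sum_(i | P i) (F i)%:Z)%R = Posz (\sum_(i | P i) F i).
Proof. by rewrite (big_morph Posz PoszD (erefl (Posz 0))). Qed.

Lemma cycle_two {T : finType} {e : rel T} {s : seq T} {x : T} :
  symmetric e -> uniq s -> 3 <= size s -> cycle e s -> x \in s ->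
  exists y z, [/\ y != z, e x y & e x z].
Proof.
move=> sym us ss cs /rot_to [i s' Hr].
have : uniq (x :: s') by rewrite -Hr rot_uniq.
have : cycle e (x :: s') by rewrite -Hr rot_cycle.
have : 3 <= size (x :: s') by rewrite -Hr size_rot.
case: s' Hr => [|y [|z r]] //= _ _.
move=> /and3P [exy _ pz].
move: pz; rewrite rcons_path => /andP [_ el].
rewrite !inE => /and4P [_ + _ _]; rewrite negb_or => /andP [ynz yr].
exists y, (last z r); split => //; last by rewrite sym.
apply/negP => /eqP Ey.
have := mem_last z r; rewrite -Ey inE (negbTE ynz) /=.
by rewrite (negbTE yr).
Qed.

Lemma pend_nb {T : finType} {e : rel T} {w u : T} :
  pendant e w -> e w u -> nbhd e w = [set u].
Proof.
move=> /cards1P [z Hz] ewu.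
have : u \in nbhd e w by rewrite inE.
by rewrite Hz inE => /eqP ->.
Qed.

Lemma deg_pos {T : finType} {e : rel T} {x y : T} : e x y -> 0 < deg e x.
Proof. by move=> exy; apply/card_gt0P; exists y; rewrite inE. Qed.

Lemma key_ineq {A B K Q : int} :
  (1 <= K)%R -> (1 <= Q)%R -> K = (A + B - 1)%R -> Q = (1 - B * (K - 1))%R ->
  (A * Q + B - Q ^+ 2 <= K + Q - 1)%R.
Proof.
move=> K1 Q1 HK HQ.
have -> : A = (K - B + 1)%R by rewrite HK; ring.
have -> : ((K - B + 1) * Q + B - Q ^+ 2 = K + Q - 1 - B * (1 + B) * (K - 1) * (K - 2))%R.
  by rewrite HQ; ring.
rewrite gerBl.
have H0 : (0 <= - B * (K - 1))%R by rewrite HQ in Q1; lra.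
have [K2|K3] := lerP K 2.
  have : (K = 1 \/ K = 2)%R by lia.
  by case=> ->; rewrite ?subrr ?mulr0 //; have -> : (1 - 2 = -1 :> int)%R by []; lia.
have Bn : (B <= 0)%R.
  rewrite leNgt; apply/negP => Bp.
  have : (0 < B * (K - 1))%R by apply: mulr_gt0; lia.
  rewrite mulNr in H0; lia.
have BB : (0 <= B * (1 + B))%R.
  have [->|Bl] := eqVneq B 0; first by rewrite mul0r.
  by rewrite -mulrNN mulr_ge0 //; lia.
rewrite -mulrA mulr_ge0 // mulr_ge0 //; lia.
Qed.
Lemma no_tree {T : finType} {e : rel T} {u p : T} :
  simple_graph e -> connected_graph e -> has_cycle e -> e u p ->
  (forall v, e u v -> v != p -> pendant e v) ->
  (forall v, e p v -> v != u -> pendant e v) -> False.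
Proof.
move=> [sym irr] conn [s [ss us cs]] eup Hu Hp.
pose S := [pred x | [|| x == u, x == p, e u x | e p x]].
have one : forall x y, e x y -> x \in S -> y \in S.
  move=> x y exy; rewrite !inE => /or4P [/eqP Ex|/eqP Ex|eux|epx].
  - by rewrite -Ex exy !orbT.
  - by rewrite -Ex exy !orbT.
  - have [Exp|nxp] := eqVneq x p; first by rewrite -Exp exy !orbT.
    have := pend_nb (Hu x eux nxp) (etrans (sym x u) eux).
    have : y \in nbhd e x by rewrite inE.
    by move=> + Hn; rewrite Hn inE => /eqP ->; rewrite eqxx.
  - have [Exu|nxu] := eqVneq x u; first by rewrite -Exu exy !orbT.
    have := pend_nb (Hp x epx nxu) (etrans (sym x p) epx).
    have : y \in nbhd e x by rewrite inE.
    by move=> + Hn; rewrite Hn inE => /eqP ->; rewrite eqxx orbT.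
have cl : closed e S.
  move=> x y exy; apply/idP/idP; first exact: one.
  by apply: one; rewrite sym.
have allS : forall y, y \in S.
  by move=> y; rewrite -(closed_connect cl (conn u y)) inE eqxx.
have [x xs xn] : exists2 x, x \in s & x \notin [:: u; p].
  apply/allPn; apply/negP => /allP sub.
  by have := uniq_leq_size us sub; rewrite /=; lia.
have [y [z [yz exy exz]]] := cycle_two sym us ss cs xs.
have px : pendant e x.
  move: xn (allS x); rewrite !inE negb_or => /andP [xu xp] /or4P [|||].
  - by rewrite (negbTE xu).
  - by rewrite (negbTE xp).
  - by move=> eux; apply: Hu.
  - by move=> epx; apply: Hp.
have Hn := pend_nb px exy.
have : z \in nbhd e x by rewrite inE.
by rewrite Hn inE => /eqP Ez; rewrite Ez eqxx in yz.
Qed.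
Lemma sum_le_card {T : finType} (A : {set T}) (F : T -> nat) :
  (forall i, i \in A -> 0 < F i) -> \sum_(i in A) F i <= #|A| ->
  forall i, i \in A -> F i = 1.
Proof.
move=> Fp Hs i iA.
have E : \sum_(i in A) F i = \sum_(i in A) (F i - 1) + #|A|.
  rewrite -sum1_card -big_split /=; apply: eq_bigr => j jA.
  by rewrite subnK // Fp.
rewrite E -[X in _ <= X]add0n leq_add2r leqn0 sum_nat_eq0 in Hs.
move/forallP: Hs => /(_ i); rewrite iA /= subn_eq0 => H.
by have := Fp i iA; lia.
Qed.

Lemma p_pend {T : finType} {e : rel T} {a b : int} {u p : T} :
  simple_graph e -> in_Gab e a b -> e u p ->
  (forall v, e u v -> v != p -> pendant e v) ->
  Posz (deg e u) = (a + b - 1)%R ->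
  forall v, e p v -> v != u -> pendant e v.
Proof.
move=> [sym irr] [_ Hg] eup Hu Hk.
have pu : p \in nbhd e u by rewrite inE.
have up : u \in nbhd e p by rewrite inE sym.
have Su : (\sum_(v in nbhd e u) deg e v = deg e p + #|nbhd e u :\ p|)%N.
  rewrite (big_setD1 p pu) /=; congr (_ + _).
  rewrite -sum1_card; apply: eq_bigr => i; rewrite in_setD1 inE => /andP [ip ui].
  exact/eqP/(Hu i ui ip).
have Ck : deg e u = (#|nbhd e u :\ p|).+1 by rewrite /deg (cardsD1 p) pu.
have Hgu := Hg u; rewrite sumZ Su Ck in Hgu.
rewrite Ck in Hk.
set K := Posz (#|nbhd e u :\ p|).+1 in Hk Hgu.
have Ha : a = (K - b + 1)%R by lia.
have Hq : Posz (deg e p) = (1 - b * (K - 1))%R.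
  have -> : Posz (deg e p) = (a * K + b - K ^+ 2 - (K - 1))%R.
    by rewrite -Hgu PoszD /K; lia.
  by rewrite Ha; ring.
have K1 : (1 <= K)%R by rewrite /K; lia.
have Q1 : (1 <= Posz (deg e p))%R by have := deg_pos (etrans (sym p u) eup); lia.
have Hle := key_ineq K1 Q1 Hk Hq.
have Hgp := Hg p; rewrite sumZ (big_setD1 u up) /= in Hgp.
have Hr : \sum_(v in nbhd e p :\ u) deg e v <= #|nbhd e p :\ u|.
  have Cq : deg e p = (#|nbhd e p :\ u|).+1 by rewrite /deg (cardsD1 u) up.
  move: Hle; rewrite -Hgp Cq PoszD /K -Ck; lia.
move=> v epv vu; apply/eqP; apply: (@sum_le_card _ (nbhd e p :\ u) (deg e) _ Hr).
  by move=> i; rewrite in_setD1 inE => /andP [_ epi]; apply: (deg_pos (y := p)); rewrite sym.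
by rewrite in_setD1 inE vu epv.
Qed.
Lemma pend_deg {T : finType} {e : rel T} {a b : int} {u w : T} :
  in_Gab e a b -> e w u -> pendant e w -> Posz (deg e u) = (a + b - 1)%R.
Proof.
move=> [_ Hg] ewu pw; have := Hg w.
rewrite (pend_nb pw ewu) big_set1 (eqP pw) => ->; lia.
Qed.

Lemma two_nonpend {T : finType} {e : rel T} {a b : int} {u w : T} :
  simple_graph e -> in_Gab e a b -> has_cycle e -> e u w -> pendant e w ->
  2 <= #|[set v | (deg e v != 1) && e u v]|.
Proof.
move=> sg Gab hc euw pw.
have [sym irr] := sg.
have Hk := pend_deg Gab (etrans (sym w u) euw) pw.
rewrite leqNgt; apply/negP => H.
set X := [set v | (deg e v != 1) && e u v] in H.
have [p [eup Hu]] : exists p, e u p /\ forall v, e u v -> v != p -> pendant e v.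
  have [/cards1P [p Hp]|n1] := boolP (#|X| == 1).
    have : p \in X by rewrite Hp inE.
    rewrite inE => /andP [_ eup]; exists p; split => // v euv vp.
    apply/negPn/negP => dv.
    have : v \in X by rewrite inE dv euv.
    by rewrite Hp inE (negbTE vp).
  have X0 : #|X| = 0 by move: H n1; case: #|X| => [|[|]].
  exists w; split => // v euv _; apply/negPn/negP => dv.
  have : v \in X by rewrite inE dv euv.
  by rewrite (cards0_eq X0) inE.
have [conn _] := Gab.
exact: (no_tree sg conn hc eup Hu (p_pend sg Gab eup Hu Hk)).
Qed.
Lemma base_eq {T : finType} {e : rel T} {a b : int} :
  simple_graph e -> in_Gab e a b -> has_cycle e -> (exists w : T, pendant e w) ->
  base e = [set v | deg e v != 1].
Proof.
move=> sg Gab hc [w pw].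
have [sym irr] := sg.
set N := [set v | deg e v != 1].
have P1 : prune e [set: T] = N.
  apply/setP => v; rewrite /prune /deg_in.
  rewrite inE in_setT /=.
  have -> : [set u in [set: T] | e v u] = nbhd e v by apply/setP => x; rewrite !inE.
  by rewrite !inE.
have P2 : prune e N = N.
  apply/setP => v; rewrite [in LHS]inE; case vN: (v \in N) => //=.
  rewrite /deg_in.
  case: (boolP [exists w, e v w && pendant e w]) => [/existsP [w' /andP [evw pw']] | np].
    have := two_nonpend sg Gab hc evw pw'.
    have -> : [set u in N | e v u] = [set x | (deg e x != 1) && e v x].
      by apply/setP => x; rewrite !inE.
    by case: #|_| => [|[|]].
  have -> : [set u in N | e v u] = nbhd e v.
    apply/setP => x; rewrite !inE; case evx: (e v x); rewrite ?andbF ?andbT //.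
    apply/negP => px; move/negP: np; apply; apply/existsP; exists x; by rewrite evx.
  by move: vN; rewrite inE.
rewrite /base.
have : 0 < #|T| by apply/card_gt0P; exists w.
case: #|T| => // n _.
elim: n => [|n IH] /=; first exact: P1.
by rewrite -/(iter n.+1 _ _) IH P2.
Qed.
Theorem lemma1p8 (T : finType) (e : rel T) (a b : int) :
  simple_graph e -> in_Gab e a b -> has_cycle e -> (exists w : T, pendant e w) ->
  (forall u : T, u \in base e ->
     ((Posz (deg e u)) = (Posz (deg_base e u)) \/ (Posz (deg e u)) = (a + b - 1)%R)) /\
  (forall u : T, u \notin base e -> deg e u = 1%N) /\
  (forall u : T, attached e u ->
     [/\ (b <= -1)%R,
         (Posz (deg e u)) = (a + b - 1)%R,
         ((Posz (deg_base e u)) < a + b - 1)%R &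
         (\sum_(v in base e | e u v) (Posz (deg e v))
            = - (a * b) - b ^+ 2 + 2 * b + (Posz (deg_base e u)))%R]).
Proof.
move=> sg Gab hc hw.
have [sym irr] := sg.
have Hb : forall v, (v \in base e) = (deg e v != 1).
  by move=> v; rewrite (base_eq sg Gab hc hw) inE.
split; [|split].
- move=> u ub.
  case: (boolP [exists w, e u w && pendant e w]) => [/existsP [w /andP [euw pw]] | np].
    by right; apply: (pend_deg Gab _ pw); rewrite sym.
  left; congr Posz; rewrite /deg_base /deg_in /deg; apply: eq_card => x.
  rewrite !inE Hb; case eux: (e u x); rewrite ?andbF ?andbT //.
  have -> // : deg e x != 1.
  apply/negP => px; move/negP: np; apply; apply/existsP; exists x; by rewrite eux.
- by move=> u; rewrite Hb negbK => /eqP.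
move=> u /andP [ub /existsP [w /andP [euw pw]]].
have Hk := pend_deg Gab (etrans (sym w u) euw) pw.
set db := deg_base e u.
have dbE : db = #|[set v | (v \in base e) && e u v]| by [].
pose c := #|[set v | e u v && (v \notin base e)]|.
have E1 : \sum_(v in nbhd e u) deg e v = \sum_(v | (v \in base e) && e u v) deg e v + c.
  rewrite (eq_bigl (fun v => e u v)); last by move=> x; rewrite inE.
  rewrite (bigID (fun v => v \in base e)) /=; congr (_ + _).
    by apply: eq_bigl => x; rewrite andbC.
  rewrite /c -sum1dep_card; apply: eq_bigr => x /andP [_].
  by rewrite Hb negbK => /eqP.
have E2 : deg e u = db + c.
  rewrite /deg -sum1_card dbE /c -!sum1dep_card.
  rewrite (eq_bigl (fun v => e u v)); last by move=> x; rewrite inE.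
  rewrite (bigID (fun v => v \in base e)) /=; congr (_ + _).
  by apply: eq_bigl => x; rewrite andbC.
have c1 : 0 < c by apply/card_gt0P; exists w; rewrite inE euw Hb negbK.
have db2 : 2 <= db.
  have := two_nonpend sg Gab hc euw pw; rewrite dbE.
  have -> : [set v | (deg e v != 1) && e u v] = [set v | (v \in base e) && e u v].
    by apply/setP => x; rewrite !inE Hb.
  by [].
set Sb := \sum_(v | (v \in base e) && e u v) deg e v in E1.
have Sb2 : db + db <= Sb.
  rewrite dbE -sum1dep_card -big_split /=; apply: leq_sum => x /andP [xb eux].
  have := deg_pos (etrans (sym x u) eux); move: xb; rewrite Hb; lia.
have Hgu := (proj2 Gab) u; rewrite sumZ E1 E2 in Hgu.
rewrite E2 in Hk.
have HS : Posz Sb = (- (a * b) - b ^+ 2 + 2 * b + Posz db)%R.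
  have -> : Posz Sb = (a * Posz (db + c) + b - (Posz (db + c)) ^+ 2 - Posz (db + c) + Posz db)%R.
    by move: Hgu; rewrite !PoszD; lia.
  by rewrite Hk; ring.
have HS2 : Posz Sb = (- (b * (a + b - 1 - 1)) + Posz db)%R by rewrite HS; ring.
rewrite sumZ HS E2 Hk; split => //; last by lia.
rewrite leNgt; apply/negP => bpos.
have : (0 <= b * (a + b - 1 - 1))%R by apply: mulr_ge0; lia.
lia.
Qed.
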